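(* Let $N$ be a non-negative integer and $c_0,\dots,c_4$ parameters with $c_0+c_1+c_2+c_3+c_4=-2N-3$. For non-negative integers $i,j,x,y$ with $i+j\le N$ and $x+y\le N$, \[ \frac{T_{i,j}(x,y;c_1,c_2,c_3,c_4;N)}{\Omega(i;c_1,c_2,c_3;N-j)\,\Lambda(j;c_4,c_0;N)}=\frac{T_{y,x}(j,i;c_4,c_0,c_3,c_1;N)}{\Omega(y;c_4,c_0,c_3;N-x)\,\Lambda(x;c_1,c_2;N)}. \]
   Context: Notation: $(a)_n=a(a+1)\cdots(a+n-1)$, $(a)_0=1$; $c_{ij}=c_i+c_j$, $c_{ijk}=c_i+c_j+c_k$. Parameters are generic so that no denominator vanishes. For $0\le n,x\le N$: \[ \Omega(n;c_1,c_2,c_3;N)=\binom{N}{n}(2n+c_{23}+1)\frac{(c_2+1)_n(N+2+c_{123})_n(c_1+1)_{N-n}}{(c_3+1)_n(c_{23}+n+1)_{N+1}}, \] \[ p_n(x;c_1,c_2,c_3;N)=\Omega(n;c_1,c_2,c_3;N)\,{}_4F_3\!\left(\begin{matrix}-n,\ n+c_{23}+1,\ -x,\ x+c_{12}+1\\ c_2+1,\ N+2+c_{123},\ -N\end{matrix};1\right) \] (terminating sum), and $\Lambda(x;c_1,c_2;N)=(-1)^x\binom{N}{x}(2x+c_{12}+1)\frac{(c_2+1)_x}{(c_1+1)_x(x+c_{12}+1)_{N+1}}$. For parameters $(a_1,a_2,a_3,a_4)$, set $a_0=-2N-3-a_1-a_2-a_3-a_4$ and define, for non-negative integers $i,j,x,y$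 with $i+j\le N$, $x+y\le N$, \[ T_{i,j}(x,y;a_1,a_2,a_3,a_4;N)=p_i(x;a_1,a_2,a_3;N-j)\,p_j(y;a_3,a_0,a_4;N-x). \] In particular, in $T_{y,x}(j,i;c_4,c_0,c_3,c_1;N)$ the role of $a_0$ is played by $c_2$. *)

(* Defs.v *)
From HB Require Import structures.
From mathcomp Require Import all_boot all_order all_algebra.
Set Implicit Arguments. Unset Strict Implicit. Unset Printing Implicit Defensive.
Import Order.TTheory GRing.Theory Num.Theory.
Local Open Scope ring_scope.

Section Defs.
Variable R : numFieldType.

Definition poch (a : R) (n : nat) : R := \prod_(k < n) (a + k%:R).

Definition Omega (n : nat) (c1 c2 c3 : R) (N : nat) : R :=
  ('C(N, n))%:R * (2 * n%:R + (c2 + c3) + 1)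
  * (poch (c2 + 1) n * poch (N%:R + 2 + (c1 + c2 + c3)) n * poch (c1 + 1) (N - n))
  / (poch (c3 + 1) n * poch (c2 + c3 + n%:R + 1) N.+1).

(* terminating 4F3(-n, n+c23+1, -x, x+c12+1; c2+1, N+2+c123, -N; 1),
   as a terminating sum over k = 0..min(n,x): all later terms have a vanishing
   numerator factor (-n)_k or (-x)_k (summing only these avoids 0/0 from
   (-N)_k when k > N, which can occur in T for p_j(y;..;N-x) with j > N-x) *)
Definition F43 (n x : nat) (c1 c2 c3 : R) (N : nat) : R :=
  \sum_(k < (minn n x).+1)
     (poch (- n%:R) k * poch (n%:R + (c2 + c3) + 1) k
      * poch (- x%:R) k * poch (x%:R + (c1 + c2) + 1) k)
   / (poch (c2 + 1) k * poch (N%:R + 2 + (c1 + c2 + c3)) k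
      * poch (- N%:R) k * (k`!)%:R).

Definition pn (n x : nat) (c1 c2 c3 : R) (N : nat) : R :=
  Omega n c1 c2 c3 N * F43 n x c1 c2 c3 N.

Definition Lambda (x : nat) (c1 c2 : R) (N : nat) : R :=
  (-1) ^+ x * ('C(N, x))%:R * (2 * x%:R + (c1 + c2) + 1)
  * (poch (c2 + 1) x / (poch (c1 + 1) x * poch (x%:R + (c1 + c2) + 1) N.+1)).

Definition T (i j x y : nat) (a1 a2 a3 a4 : R) (N : nat) : R :=
  let a0 := - (2 * N%:R + 3) - a1 - a2 - a3 - a4 in
  pn i x a1 a2 a3 (N - j) * pn j y a3 a0 a4 (N - x).

(* Genericity: the denominators occurring in p_n(.; c1,c2,c3; N) do not vanish
   ((a)_n <> 0 implies (a)_k <> 0 for k <= n; (-N)_k <> 0 automatically for k <= n <= N). *)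
Definition p_generic (n : nat) (c1 c2 c3 : R) (N : nat) : Prop :=
  [/\ poch (c3 + 1) n != 0, poch (c2 + c3 + n%:R + 1) N.+1 != 0,
      poch (c2 + 1) n != 0 & poch (N%:R + 2 + (c1 + c2 + c3)) n != 0].

Definition Lambda_generic (x : nat) (c1 c2 : R) (N : nat) : Prop :=
  poch (c1 + 1) x != 0 /\ poch (x%:R + (c1 + c2) + 1) N.+1 != 0.

End Defs.

(* Main.v *)
Require Import Defs.
From mathcomp Require Import all_boot all_order all_algebra.
From mathcomp Require Import ring zify.
Import GRing.Theory Num.Theory.
Local Open Scope ring_scope.


Lemma poch_add (R : numFieldType) (a : R) m n : poch a (m + n) = poch a m * poch (a + m%:R) n.
Proof.
rewrite /poch big_split_ord /=; congr (_ * _); apply: eq_bigr => i _.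
by rewrite /= natrD addrA.
Qed.

Lemma poch_recl (R : numFieldType) (a : R) n : poch a n.+1 = a * poch (a + 1) n.
Proof.
rewrite /poch big_ord_recl /= addr0; congr (_ * _); apply: eq_bigr => i _.
rewrite /= /bump /= add1n -natr1; ring.
Qed.

Lemma poch_recr (R : numFieldType) (a : R) n : poch a n.+1 = poch a n * (a + n%:R).
Proof. by rewrite /poch big_ord_recr. Qed.

Lemma poch_refl (R : numFieldType) (b : R) n : poch (- b) n = (-1) ^+ n * poch (b - n%:R + 1) n.
Proof.
elim: n => [|n IH]; first by rewrite /poch !big_ord0 expr0 mulr1.
rewrite poch_recr IH poch_recl exprS -natr1.
have -> : b - (n%:R + 1) + 1 = b - n%:R by ring.
ring.
Qed.

Lemma binC (N x j : nat) : (x <= N)%N -> (j <= N)%N ->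
  ('C(N - x, j) * 'C(N, x) = 'C(N - j, x) * 'C(N, j))%N.
Proof.
move=> hx0 hj0.
case: (leqP (x + j) N) => h; last first.
  have h1 : (N - x < j)%N by lia.
  have h2 : (N - j < x)%N by lia.
  by rewrite (bin_small h1) (bin_small h2) !mul0n.
have hx : (x <= N)%N by lia.
have hj : (j <= N)%N by lia.
have hxj : (j <= N - x)%N by lia.
have hjx : (x <= N - j)%N by lia.
apply/eqP; rewrite -(eqn_pmul2r (fact_gt0 x)) -(eqn_pmul2r (fact_gt0 j))
  -(eqn_pmul2r (fact_gt0 (N - x - j))); apply/eqP.
transitivity N`!.
  rewrite -(bin_fact hx) -(bin_fact hxj).  ring.
rewrite -(bin_fact hj) -(bin_fact hjx) subnAC; ring.
Qed.

Lemma F43_sym (R : numFieldType) n x (c1 c2 c3 : R) N : F43 n x c1 c2 c3 N = F43 x n c3 c2 c1 N.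
Proof.
rewrite /F43 minnC; apply: eq_bigr => k _.
have -> : c3 + c2 + c1 = c1 + c2 + c3 by ring.
rewrite (addrC c2 c1) (addrC c3 c2); congr (_ / _); ring.
Qed.

Lemma poch_refl' (R : numFieldType) (a b : R) n : a = -(b + n%:R - 1) -> poch a n = (-1) ^+ n * poch b n.
Proof. move=> ->; rewrite poch_refl; congr (_ * poch _ _); ring. Qed.

Theorem mainTheorem2 (R : numFieldType) (N : nat) (c0 c1 c2 c3 c4 : R)
  (i j x y : nat)
  (hsum : c0 + c1 + c2 + c3 + c4 = - (2 * N%:R + 3))
  (hij : (i + j <= N)%N) (hxy : (x + y <= N)%N)
  (* genericity: no denominator vanishes *)
  (g1 : p_generic i c1 c2 c3 (N - j)) (g2 : p_generic j c3 c0 c4 (N - x))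
  (g3 : p_generic y c4 c0 c3 (N - x)) (g4 : p_generic x c3 c2 c1 (N - j))
  (g5 : Lambda_generic j c4 c0 N) (g6 : Lambda_generic x c1 c2 N)
  (d1 : Omega i c1 c2 c3 (N - j) != 0) (d2 : Lambda j c4 c0 N != 0)
  (d3 : Omega y c4 c0 c3 (N - x) != 0) (d4 : Lambda x c1 c2 N != 0) :
  T i j x y c1 c2 c3 c4 N / (Omega i c1 c2 c3 (N - j) * Lambda j c4 c0 N)
  = T y x j i c4 c0 c3 c1 N / (Omega y c4 c0 c3 (N - x) * Lambda x c1 c2 N).

Proof.
have hx : (x <= N)%N by lia.
have hj : (j <= N)%N by lia.
have hc0 : c0 = - (2 * N%:R + 3) - c1 - c2 - c3 - c4 by rewrite -hsum; ring.
have ha0 : - (2 * N%:R + 3) - c1 - c2 - c3 - c4 = c0 by rewrite hc0.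
have ha0' : - (2 * N%:R + 3) - c4 - c0 - c3 - c1 = c2 by rewrite hc0; ring.
rewrite /T /= ha0 ha0' /pn (F43_sym _ i x) (F43_sym _ j y).
set F1 := F43 x i c3 c2 c1 (N - j); set F2 := F43 y j c4 c0 c3 (N - x).
suff key : Omega j c3 c0 c4 (N - x) * Lambda x c1 c2 N
         = Omega x c3 c2 c1 (N - j) * Lambda j c4 c0 N.
  have -> : Omega j c3 c0 c4 (N - x)
          = Omega x c3 c2 c1 (N - j) * Lambda j c4 c0 N / Lambda x c1 c2 N.
    by rewrite -key; field.
  by field; rewrite ?d1 ?d2 ?d3 ?d4.
move: g2 g4 g5 g6 => [g21 g22 _ _] [g41 g42 _ _] [g51 g52] [g61 g62].
have e1 : poch (j%:R + (c4 + c0) + 1) N.+1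
  = poch (c0 + c4 + j%:R + 1) (N - x).+1
    * ((-1) ^+ x * poch ((N - j)%:R + 2 + (c3 + c2 + c1)) x).
  have -> : N.+1 = ((N - x).+1 + x)%N by lia.
  rewrite poch_add; congr (_ * _); first by congr poch; ring.
  apply: poch_refl'; rewrite hc0 -[(N - x).+1%:R]natr1 !natrB //; ring.
have e2 : poch (x%:R + (c1 + c2) + 1) N.+1
  = poch (c2 + c1 + x%:R + 1) (N - j).+1
    * ((-1) ^+ j * poch ((N - x)%:R + 2 + (c3 + c0 + c4)) j).
  have -> : N.+1 = ((N - j).+1 + j)%N by lia.
  rewrite poch_add; congr (_ * _); first by congr poch; ring.
  apply: poch_refl'; rewrite hc0 -[(N - j).+1%:R]natr1 !natrB //; ring.
rewrite e1 in g52; rewrite e2 in g62.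
move: g52 g62; rewrite !mulf_eq0 !negb_or !signr_eq0 /= => /andP[_ q1] /andP[_ q2].
have hCx : ('C(N, x))%:R != 0 :> R by rewrite pnatr_eq0 -lt0n bin_gt0.
have hb : ('C(N - x, j))%:R = ('C(N - j, x))%:R * ('C(N, j))%:R / ('C(N, x))%:R :> R.
  rewrite -natrM -binC ?natrM //.
  by field.
rewrite /Omega /Lambda e1 e2 (subnAC N x j) hb.
rewrite -[(-1) ^+ x](signr_odd _ x) -[(-1) ^+ j](signr_odd _ j).
by case: (odd x); case: (odd j); rewrite /= ?expr0 ?expr1; field; rewrite ?g21 ?g22 ?g41 ?g42 ?q1 ?q2 ?hCx.
Qed.
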